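(* Let $1\le f\le\lfloor n/2\rfloor$ and $d\in\mathcal D_f$. Then $\ell(wd)\ge\ell(d)$ for every $w\in\Psi$.
   Context: $\mathfrak S_n$ acts on $\{1,\dots,n\}$ on the right: $(a)(\sigma\tau)=((a)\sigma)\tau$; $s_j=(j,j+1)$, $\ell$ is the Coxeter length (number of inversions). Let $\nu_f=((2^f),(n-2f))$ and $\mathfrak t^{\nu_f}$ the bitableau with $1,\dots,n$ entered in order along the rows of the first component (shape $(2^f)$) and then along the single row of the second component; $\mathfrak t^{\nu_f}d$ replaces each entry $a$ by $(a)d$. $\mathcal D_{\nu_f}$ is the set of $d\in\mathfrak S_n$ such that $\mathfrak t^{\nu_f}d$ is row standard and the first column of its first component increases from top to bottom; $\mathcal D_f=\mathcal D_{\nu_f}\cap\mathfrak S_{2f}$. $\mathfrak S_{(2^f)}$ is the subgroup generated by $s_1,s_3,\dots,s_{2f-1}$; $\Pi$ is the subgroup of $\mathfrak S_{2f}$ permuting the rows of the first component of $\mathfrak t^{\nu_f}$ while keeping the entries within rows in order (generated by $\tilde s_i=s_{2i}s_{2i-1}s_{2i+1}s_{2i}$, $1\le i\le f-1$); $\Psi=\mathfrak S_{(2^f)}\rtimes\Pi$. *)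

(* Defs.v *)
(* Convention: {1,...,n} is encoded as 'I_n via a |-> a-1.
   MathComp's permutation product satisfies (s * t) x = t (s x) (permM),
   i.e. it is exactly the right action of the paper: (a)(st) = ((a)s)t. *)
From mathcomp Require Import all_boot all_order all_fingroup.
Set Implicit Arguments. Unset Strict Implicit. Unset Printing Implicit Defensive.

Local Open Scope group_scope.

(* The value (a)d, for a 1-indexed point a in {1,...,n} (0 outside). *)
Definition pt (n : nat) (d : 'S_n) (a : nat) : nat :=
  if insub a.-1 is Some i then (val (d i)).+1 else 0.

(* s_j = (j, j+1) (1-indexed); identity if j,j+1 not both in {1..n}. *)
Definition sj (n j : nat) : 'S_n :=
  match (insub j.-1 : option 'I_n), (insub j : option 'I_n) with
  | Some x, Some y => tperm x y
  | _, _ => 1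
  end.

Definition stilde (n i : nat) : 'S_n :=
  sj n i.*2 * sj n i.*2.-1 * sj n i.*2.+1 * sj n i.*2.

(* Coxeter length = number of inversions. *)
Definition ell (n : nat) (s : 'S_n) : nat :=
  #|[set p : 'I_n * 'I_n | (p.1 < p.2) && (s p.2 < s p.1)]|.

Definition S2f_gens (n f : nat) : {set 'S_n} :=
  [set sj n (k : nat).*2.+1 | k : 'I_f].
Definition Pi_gens (n f : nat) : {set 'S_n} :=
  [set stilde n (k : nat).+1 | k : 'I_f.-1].
Definition Psi (n f : nat) : {set 'S_n} := <<S2f_gens n f :|: Pi_gens n f>>.

Definition inS (n m : nat) (d : 'S_n) : Prop :=
  forall a, m < a <= n -> pt d a = a.

(* d in D_{nu_f}: t^{nu_f} d row standard, first column of first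
   component increasing. Rows of first component: (2i-1, 2i), 1<=i<=f;
   second component row: 2f+1, ..., n. *)
Definition in_Dnu (n f : nat) (d : 'S_n) : Prop :=
  [/\ (forall i, 1 <= i <= f -> pt d i.*2.-1 < pt d i.*2),
      (forall a, f.*2 < a -> a < n -> pt d a < pt d a.+1)
    & (forall i, 1 <= i < f -> pt d i.*2.-1 < pt d i.*2.+1)].

Definition in_Df (n f : nat) (d : 'S_n) : Prop := in_Dnu f d /\ inS f.*2 d.

(* Main.v *)
Require Import Defs.
From mathcomp Require Import all_boot all_order all_fingroup zify.
Set Implicit Arguments. Unset Strict Implicit. Unset Printing Implicit Defensive.

Definition tpn (a b z : nat) := if z == a then b else if z == b then a else z.

Lemma tpnP a b z : (z = a /\ tpn a b z = b) \/ (z = b /\ z <> a /\ tpn a b z = a)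
  \/ (z <> a /\ z <> b /\ tpn a b z = z).
Proof. rewrite /tpn; case: eqP => ?; [by left|]; case: eqP => ?; [by right; left|by right;right]. Qed.

Lemma sjE n j (x : 'I_n) : j < n -> val (sj n j x) = tpn j.-1 j x.
Proof.
move=> jn; have j1 : j.-1 < n by lia.
rewrite /sj (insubT (fun k => k < n) j1) (insubT (fun k => k < n) jn) /tpn.
case: tpermP => [->|->|ha hb] /=; first by rewrite eqxx.
- by case: eqP => [e|_]; [lia|rewrite eqxx].
- case: eqP => [e|_]; first by case: ha; apply: val_inj.
  by case: eqP => [e|//]; case: hb; apply: val_inj.
Qed.

Definition Pb n (g : 'S_n) := forall x y : 'I_n, x %/ 2 = y %/ 2 -> (g x) %/ 2 = (g y) %/ 2.

Definition bm i b := if b == i.-1 then i else if b == i then i.-1 else b.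

Lemma bmP i b : (b = i.-1 /\ bm i b = i) \/ (b = i /\ b <> i.-1 /\ bm i b = i.-1)
  \/ (b <> i.-1 /\ b <> i /\ bm i b = b).
Proof. rewrite /bm; case: eqP => ?; [by left|]; case: eqP => ?; [by right; left|by right;right]. Qed.

Lemma stildeNat i z : 1 <= i ->
  (tpn i.*2.-1 i.*2 (tpn i.*2 i.*2.+1 (tpn i.*2.-2 i.*2.-1 (tpn i.*2.-1 i.*2 z)))) %/ 2
  = bm i (z %/ 2).
Proof.
move=> i1.
have [[e1 ->]|[[e1 [n1 ->]]|[n1 [n2 ->]]]] := tpnP i.*2.-1 i.*2 z;
  set z1 := (X in tpn i.*2.-2 i.*2.-1 X);
have [[e2 ->]|[[e2 [n3 ->]]|[n3 [n4 ->]]]] := tpnP i.*2.-2 i.*2.-1 z1;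
  set z2 := (X in tpn i.*2 i.*2.+1 X);
have [[e3 ->]|[[e3 [n5 ->]]|[n5 [n6 ->]]]] := tpnP i.*2 i.*2.+1 z2;
  set z3 := (X in tpn i.*2.-1 i.*2 X);
have [[e4 ->]|[[e4 [n7 ->]]|[n7 [n8 ->]]]] := tpnP i.*2.-1 i.*2 z3;
have [[e5 ->]|[[e5 [n9 ->]]|[n9 [n10 ->]]]] := bmP i (z %/ 2);
  subst z1 z2 z3; lia.
Qed.

Lemma PbM n (g h : 'S_n) : Pb g -> Pb h -> Pb (g * h)%g.
Proof. by move=> pg ph x y e; rewrite !permM; apply: ph; apply: pg. Qed.

Lemma Pb1 n : Pb (1 : 'S_n)%g.
Proof. by move=> x y e; rewrite !perm1. Qed.

Lemma Pbgen n f (g : 'S_n) : f.*2 <= n -> g \in S2f_gens n f :|: Pi_gens n f -> Pb g.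
Proof.
move=> fn; case/setUP => /imsetP [k _ ->] x y e.
- have kn : k.*2.+1 < n by have := ltn_ord k; lia.
  rewrite !sjE //=.
  by move: (tpnP k.*2 k.*2.+1 x) (tpnP k.*2 k.*2.+1 y); lia.
- have kn : (k.+1).*2.+1 < n by have := ltn_ord k; lia.
  rewrite /stilde !permM !sjE /=; try lia.
  by rewrite !stildeNat // e.
Qed.

Lemma PsiPb n f (w : 'S_n) : f.*2 <= n -> w \in Psi n f -> Pb w.
Proof.
move=> fn /gen_prodgP [m [c hc ->]].
elim: m c hc => [|m IH] c hc; first by rewrite big_ord0 => x y e; rewrite !perm1.
rewrite big_ord_recr /=; apply: PbM; last by apply: (Pbgen fn); apply: hc.
by apply: IH => i; apply: hc.
Qed.

Lemma ptE n (d : 'S_n) (x : 'I_n) : pt d x.+1 = (d x).+1.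
Proof. by rewrite /pt /= valK. Qed.

Lemma chain n f (d : 'S_n) :
  (forall i, 1 <= i < f -> pt d i.*2.-1 < pt d i.*2.+1) ->
  forall i j, i < j < f -> pt d (2*i).+1 < pt d (2*j).+1.
Proof.
move=> h3 i; elim=> [|j IH] /andP[ij jf]; first by [].
have hj := h3 j.+1.
have e1 : (j.+1).*2.-1 = (2*j).+1 by lia.
have e2 : (j.+1).*2.+1 = (2*j.+1).+1 by lia.
rewrite e1 e2 in hj.
have {}hj : pt d (2 * j).+1 < pt d (2 * j.+1).+1 by apply: hj; lia.
case: (ltngtP i j) => c.
- have : pt d (2 * i).+1 < pt d (2 * j).+1 by apply: IH; lia.
  lia.
- lia.
- by rewrite c.
Qed.

Theorem lemma5p7 (n f : nat) (d : 'S_n) :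
  1 <= f <= n./2 -> in_Df f d ->
  forall w : 'S_n, w \in Psi n f -> ell d <= ell (w * d)%g.
Proof.
move=> /andP[f1 fh] [[h1 h2 h3] hfix] w wP.
have fn : f.*2 <= n by lia.
have ptd := ptE d.
have Ffix : forall x : 'I_n, f.*2 <= x -> (d x : nat) = x.
  move=> x hx; have := hfix x.+1; rewrite ptd => H.
  have : (d x).+1 = x.+1 by apply: H; have := ltn_ord x; lia.
  by case.
have F1 : forall k (x y : 'I_n), (x : nat) = 2*k -> (y : nat) = (2*k).+1 -> k < f -> d x < d y.
  move=> k x y hx hy kf.
  have H := h1 k.+1.
  have e1 : (k.+1).*2.-1 = x.+1 by lia.
  have e2 : (k.+1).*2 = y.+1 by lia.
  rewrite e1 e2 !ptd in H.
  have : (d x).+1 < (d y).+1 by apply: H; lia.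
  by [].
have Fch : forall i (x y : 'I_n), (x : nat) = 2*i -> i < y %/ 2 -> y < f.*2 -> d x < d y.
  move=> i x y hx hi hy.
  have C := @chain n f d h3 i (y %/ 2).
  have {}C : pt d (2 * i).+1 < pt d (2 * (y %/ 2)).+1 by apply: C; lia.
  have H := h1 (y %/ 2).+1.
  have e1 : ((y %/ 2).+1).*2.-1 = (2 * (y %/ 2)).+1 by lia.
  have e2 : ((y %/ 2).+1).*2 = (2 * (y %/ 2)).+2 by lia.
  rewrite e1 e2 in H.
  have {}H : pt d (2 * (y %/ 2)).+1 < pt d (2 * (y %/ 2)).+2 by apply: H; lia.
  have ex : pt d (2*i).+1 = (d x).+1 by rewrite -hx ptd.
  have ey := ptd y.
  have : (y : nat) = 2 * (y %/ 2) \/ (y : nat) = (2 * (y %/ 2)).+1 by lia.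
  case=> ey'; rewrite ey' in ey; lia.
have L : forall a b : 'I_n, a < b -> d b < d a ->
    [/\ a %/ 2 < b %/ 2, a %% 2 = 1 & b < f.*2].
  move=> a b ab dba.
  have bf : b < f.*2.
    rewrite ltnNge; apply/negP => hb.
    have e1 := Ffix b hb.
    have hda : f.*2 <= d a by lia.
    have e2 := Ffix (d a) hda.
    have : d (d a) = d a by apply: val_inj.
    move/perm_inj => e3.
    rewrite e3 in dba; lia.
  have nb : a %/ 2 <> b %/ 2.
    move=> e; have := F1 (a %/ 2) a b; lia.
  have ho : a %% 2 = 1.
    have : a %% 2 = 0 \/ a %% 2 = 1 by lia.
    case => // e.
    have := Fch (a %/ 2) a b; lia.
  split => //; lia.
pose u := (w^-1)%g.
have uP : u \in Psi n f by rewrite /u /Psi groupV.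
have Pw := PsiPb fn wP.
have Pu := PsiPb fn uP.
have wu : forall z, w (u z) = z := permKV w.
pose pr (a : 'I_n) : 'I_n := insubd a a.-1.
have prE : forall a : 'I_n, (pr a : nat) = a.-1.
  move=> a; rewrite val_insubd; case: ifP => // /negbT; have := ltn_ord a; lia.
have E : forall a b : 'I_n, a < b -> d b < d a -> ~~ (u a < u b) ->
    u b < u (pr a) /\ d (pr a) < d b.
  move=> a b ab dba nu.
  have [h12 hodd hbf] := L a b ab dba.
  have ne : (u a : nat) <> u b.
    move=> e; have e' := perm_inj (val_inj e); rewrite e' ltnn in ab; done.
  have nblk : (u a) %/ 2 <> (u b) %/ 2.
    move=> e; have := Pw (u a) (u b) e; rewrite !wu; lia.
  have same : (u (pr a)) %/ 2 = (u a) %/ 2 by apply: Pu; rewrite prE; lia.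
  split; first lia.
  apply: (Fch (a %/ 2)); rewrite ?prE; lia.
pose phi (p : 'I_n * 'I_n) :=
  if u p.1 < u p.2 then (u p.1, u p.2) else (u p.2, u (pr p.1)).
pose InvD := [set p : 'I_n * 'I_n | (p.1 < p.2) && (d p.2 < d p.1)].
have inj : {in InvD &, injective phi}.
  move=> [a b] [a' b']; rewrite !inE /= => /andP[ab dba] /andP[ab' dba'].
  rewrite /phi /=; case: ifP => c1; case: ifP => c2 [e1 e2].
  - by rewrite (perm_inj e1) (perm_inj e2).
  - have := congr1 (@nat_of_ord n) (perm_inj e1); have := congr1 (@nat_of_ord n) (perm_inj e2); rewrite prE; lia.
  - have := congr1 (@nat_of_ord n) (perm_inj e1); have := congr1 (@nat_of_ord n) (perm_inj e2); rewrite prE; lia.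
  - have [_ o1 _] := L a b ab dba; have [_ o2 _] := L a' b' ab' dba'.
    have eb := perm_inj e1; have ea := congr1 (@nat_of_ord n) (perm_inj e2); rewrite !prE in ea.
    have -> : a = a' by apply: ord_inj; lia.
    by rewrite eb.
have -> : ell d = #|InvD| by [].
rewrite -(card_in_imset inj); apply: subset_leq_card.
apply/subsetP => q /imsetP [[a b] pin ->]; move: pin; rewrite !inE /= => /andP[ab dba].
rewrite /phi /=; case: ifP => c.
- by rewrite /= !permM !wu c.
- have [h1' h2'] := E a b ab dba (negbT c).
  by rewrite /= !permM !wu h1' h2'.
Qed.
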